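(* Let $A\in\mathbb{R}^{n\times n}$, $F\in\mathbb{R}^{m\times m}$ and $g\in\mathbb{R}^{m\times 1}$ be arbitrary. Set $G=g\otimes I_n$ and $H=I_m\otimes A+F\otimes I_n$. Then there exists a nonsingular $mn\times mn$ matrix $T$ such that $$\begin{bmatrix}G & HG & \cdots & H^{m-1}G\end{bmatrix}=\begin{bmatrix}g\otimes I_n & (Fg)\otimes I_n & \cdots & (F^{m-1}g)\otimes I_n\end{bmatrix}T.$$
   Context: $\otimes$ denotes the Kronecker product. *)

(* Defs.v *)
(* Kronecker product = mxtens.tensmx (A *t B) from mathcomp-real-closed,
   with the standard convention (A *t B) (i*p+k) (j*q+l) = A i j * B k l. *)
From HB Require Import structures.
From mathcomp Require Import all_boot all_order all_algebra.
From mathcomp Require Export mxtens.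
From mathcomp Require Export reals.
Set Implicit Arguments. Unset Strict Implicit. Unset Printing Implicit Defensive.

(* Main.v *)
Require Import Defs.
From HB Require Import structures.
From mathcomp Require Import all_boot all_order all_algebra.
From mathcomp Require Import mxtens reals.
Import GRing.Theory.
Local Open Scope ring_scope.

Lemma tmul (R : realType) m n p q r s
  (A : 'M[R]_(m,n)) (B : 'M[R]_(p,q)) (C : 'M[R]_(n, r)) (D : 'M[R]_(q, s)) :
  (A *t B) *m (C *t D) = (A *m C) *t (B *m D).
Proof. exact: tensmx_mul. Qed.

Lemma tens11 (R : realType) (m n : nat) :
  (1%:M : 'M[R]_m) *t (1%:M : 'M[R]_n) = 1%:M.
Proof.
apply/matrixP => i j.
case: (mxtens_indexP i) => i0 i1; case: (mxtens_indexP j) => j0 j1.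
rewrite tensmxE !mxE (inj_eq (can_inj (@mxtens_indexK _ _))) xpair_eqE.
by case: (i0 == j0); case: (i1 == j1); rewrite ?mulr1 ?mulr0 ?mul0r.
Qed.

Lemma tens1X (R : realType) (m n : nat) (A : 'M[R]_n) k :
  ((1%:M : 'M[R]_m) *t A) ^+ k = (1%:M : 'M[R]_m) *t (A ^+ k).
Proof.
elim: k => [|k IH]; first by rewrite !expr0 tens11.
by rewrite !exprS IH -mulmxE tmul mul1mx.
Qed.

Lemma tensX1 (R : realType) (m n : nat) (F : 'M[R]_m) k :
  (F *t (1%:M : 'M[R]_n)) ^+ k = (F ^+ k) *t (1%:M : 'M[R]_n).
Proof.
elim: k => [|k IH]; first by rewrite !expr0 tens11.
by rewrite !exprS IH -mulmxE tmul mulmx1.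
Qed.

Theorem lemma3 (R : realType) (n m : nat)
    (A : 'M[R]_n) (F : 'M[R]_m) (g : 'M[R]_(m, 1)) :
  let G : 'M[R]_(m * n, 1 * n) := g *t (1%:M : 'M[R]_n) in
  let H : 'M[R]_(m * n) := (1%:M : 'M[R]_m) *t A + F *t (1%:M : 'M[R]_n) in
  exists T : 'M[R]_(\sum_(j < m) (1 * n)%N),
    T \in unitmx /\
    \mxrow_(j < m) (H ^+ j *m G)
      = \mxrow_(j < m) ((F ^+ j *m g) *t (1%:M : 'M[R]_n)) *m T.
Proof.
move=> G H.
pose B (k j : 'I_m) : 'M[R]_(1 * n) :=
  if (k <= j)%N then 'C(j, k)%:R *: ((1%:M : 'M[R]_1) *t A ^+ (j - k)) else 0.
exists (\mxblock_(k < m, j < m) B k j); split.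
  rewrite unitmxE -det_tr det_trig.
    rewrite big1 ?unitr1 // => r _; rewrite !mxE /B leqnn subnn expr0 binn.
    rewrite scale1r tens11 mxE eqxx //.
  apply/is_trig_mxP => r c ltrc; rewrite !mxE /B.
  case: ifP => h; last by rewrite mxE.
  have h2 : (tagnat.sig1 r <= tagnat.sig1 c)%N.
    by have := @tagnat.le_sig1 m (fun _ => (1 * n)%N) r c; rewrite !leEord; apply; apply: ltnW.
  have e : tagnat.sig1 c = tagnat.sig1 r by apply/val_inj/anti_leq; rewrite h h2.
  rewrite e subnn expr0 binn scale1r tens11 mxE.
  case: eqP => // E; exfalso.
  move: (tagnat.sig2K c) (tagnat.sig2K r); rewrite E e => -> Er.
  by rewrite Er ltnn in ltrc.
rewrite mul_mxrow_mxblock; apply: eq_mxrow => j.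
have cXY : GRing.comm ((1%:M : 'M[R]_m) *t A) (F *t (1%:M : 'M[R]_n)).
  rewrite /GRing.comm -mulmxE; have -> := (@tmul R _ _ _ _ _ _ (1%:M : 'M[R]_m) A F 1%:M); have -> := (@tmul R _ _ _ _ _ _ F (1%:M : 'M[R]_n) 1%:M A). by rewrite !mul1mx !mulmx1.
rewrite /H exprDn_comm // mulmx_suml.
rewrite (big_ord_widen m (fun i => (((1%:M : 'M[R]_m) *t A) ^+ (j - i) *
   (F *t (1%:M : 'M[R]_n)) ^+ i *+ 'C(j, i)) *m G) (ltn_ord j : j.+1 <= m)%N).
rewrite big_mkcond /=; apply: eq_bigr => k _.
rewrite /B ltnS; case: ifP => _; last by rewrite mulmx0.
rewrite tens1X tensX1 -scaler_nat -scalemxAl -scalemxAr -mulmxE.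
have -> := @tmul R _ _ _ _ _ _ (1%:M : 'M[R]_m) (A^+(j-k)) (F^+k) (1%:M:'M[R]_n).
rewrite mul1mx mulmx1 /G.
have -> := @tmul R _ _ _ _ _ _ (F^+k) (A^+(j-k)) g (1%:M:'M[R]_n).
have -> := @tmul R _ _ _ _ _ _ (F^+k *m g) (1%:M:'M[R]_n) (1%:M:'M[R]_1) (A^+(j-k)).
by rewrite mulmx1 mul1mx mulmx1.
Qed.
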